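(* Let $d \ge 4$. Then \[ \tau_d \ge \frac{1}{(d+1)(s_d-1)^2}. \]
   Context: For $d \ge 1$, $\tau_d$ is the minimum of $\beta_1\beta_2\cdots\beta_d$ over all $(\beta_1,\dots,\beta_{d+1}) \in \mathbb{R}^{d+1}$ satisfying $\beta_1 \ge \cdots \ge \beta_{d+1} \ge 0$, $\beta_1+\cdots+\beta_{d+1}=1$, and, for every $t \in \{1,\dots,d\}$, $\prod_{i=1}^t (\beta_i - \beta_{d+1}) \le \sum_{j=t+1}^{d+1} (\beta_j - \beta_{d+1}) + (d+1)\beta_{d+1}$. The Sylvester sequence is defined by $s_1 := 2$ and $s_i := 1 + s_1 s_2 \cdots s_{i-1}$ for $i \ge 2$. *)

(* Defs.v *)
From HB Require Import structures.
From mathcomp Require Import all_boot all_order all_algebra.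
From mathcomp Require Import boolp classical_sets reals.
Set Implicit Arguments. Unset Strict Implicit. Unset Printing Implicit Defensive.
Import Order.TTheory GRing.Theory Num.Theory.
Local Open Scope ring_scope.

(* Sylvester sequence (1-indexed): s_1 = 2, s_i = 1 + s_1 ... s_(i-1).
   sylv_prod n = s_1 * ... * s_n, and s_(n+1) = sylv_prod n + 1. *)
Fixpoint sylv_prod (n : nat) : nat :=
  match n with
  | 0 => 1
  | n.+1 => (sylv_prod n * (sylv_prod n + 1))%N
  end.
Definition sylv (i : nat) : nat := (sylv_prod i.-1 + 1)%N.

Lemma sylv_prodE n : sylv_prod n = (\prod_(1 <= k < n.+1) sylv k)%N.
Proof.
elim: n => [|n IH]; first by rewrite big_geq.
by rewrite big_nat_recr //= IH /sylv /= -IH.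
Qed.

Lemma sylv1 : sylv 1 = 2%N. Proof. by []. Qed.
Lemma sylv_rec i : (2 <= i)%N -> sylv i = (1 + \prod_(1 <= k < i) sylv k)%N.
Proof.
case: i => [|[|i]] // _.
by rewrite {1}/sylv sylv_prodE addnC.
Qed.

(* Feasibility of beta = (beta_1,...,beta_(d+1)), stored 0-indexed:
   paper's beta_i is (b (i-1)), so beta_(d+1) is (b ord_max). *)
Definition tau_feasible {R : realType} (d : nat) (b : 'I_d.+1 -> R) : Prop :=
  [/\ (forall i j : 'I_d.+1, (i <= j)%N -> b j <= b i),
      0 <= b ord_max,
      \sum_(i < d.+1) b i = 1 &
      forall t : nat, (1 <= t <= d)%N ->
        \prod_(i < d.+1 | (i < t)%N) (b i - b ord_max)
        <= \sum_(j < d.+1 | (t <= j)%N) (b j - b ord_max)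
           + d.+1%:R * b ord_max].

(* tau_d = min of beta_1 * ... * beta_d over feasible beta
   (taken as the infimum of the set of attained values; the minimum
    is attained by compactness, so the two coincide). *)
Definition tau {R : realType} (d : nat) : R :=
  inf [set x : R | exists b : 'I_d.+1 -> R,
         tau_feasible b /\ x = \prod_(i < d.+1 | (i < d)%N) b i].

(* Main.v *)
Require Import Defs.
From HB Require Import structures.
From mathcomp Require Import all_boot all_order all_algebra.
From mathcomp Require Import boolp classical_sets reals.
From mathcomp Require Import ring lra zify.
Import Order.TTheory GRing.Theory Num.Theory.
Local Open Scope ring_scope.
Definition hh {R : realType} (w : R) : R := w ^+ 2 / (1 + w).

Lemma hh_ge0 {R : realType} (w : R) : 0 <= w -> 0 <= hh w.
Proof. move=> w0; rewrite /hh; apply: divr_ge0; [exact: sqr_ge0 | lra]. Qed.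

Lemma hh_le {R : realType} (w : R) : 0 <= w -> hh w <= w.
Proof.
move=> w0; rewrite /hh ler_pdivrMr; last lra.
rewrite expr2; nra.
Qed.

Lemma hh_mono {R : realType} (v w : R) : 0 <= v -> v <= w -> hh v <= hh w.
Proof.
move=> v0 vw; rewrite /hh ler_pdivrMr; last lra.
rewrite mulrAC ler_pdivlMr; last lra.
have h1 : 0 <= (w - v) * (w + v + w * v) by apply: mulr_ge0; nra.
rewrite !expr2; nra.
Qed.

Lemma iter_hh_ge0 {R : realType} n (w : R) : 0 <= w -> 0 <= iter n hh w.
Proof. by move=> w0; elim: n => //= n IH; exact: hh_ge0. Qed.

Lemma iter_hh_mono {R : realType} n (v w : R) : 0 <= v -> v <= w -> iter n hh v <= iter n hh w.
Proof.
move=> v0 vw; elim: n => //= n IH; apply: hh_mono => //; exact: iter_hh_ge0.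
Qed.
Fixpoint Phi {R : realType} (n : nat) (T A p : R) : R :=
  match n with
  | 0 => T
  | n'.+1 => if p * (1 + A) < T then Phi n' (T - p) (A * p) p
             else iter n' hh (A * T / (1 + A))
  end.

Lemma Phi_eq {R : realType} n (w z : R) : 0 <= w -> w <= z -> Phi n w w z = iter n hh w.
Proof.
move=> w0 wz; case: n => //= n.
have -> : (z * (1 + w) < w) = false.
  by apply/negbTE; rewrite -leNgt; nra.
by rewrite -[RHS]/(iter n.+1 hh w) iterSr /hh expr2.
Qed.

Lemma Phi11 {R : realType} n : Phi n (1 : R) 1 1 = iter n hh 1.
Proof.
case: n => //= n.
have -> : ((1 : R) * (1 + 1) < 1) = false by apply/negbTE; rewrite -leNgt; lra.
by rewrite -[RHS]/(iter n.+1 hh 1) iterSr /hh expr1n mul1r.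
Qed.

Definition psi {R : realType} (A T : R) (k : nat) (z : R) : R :=
  A * z ^+ k * (T - k%:R * z) / (1 + A * z ^+ k).

Lemma KF {R : realType} k (x y : R) : 0 <= x -> 0 <= y ->
  y ^+ k * (k.+1%:R * x - k%:R * y) <= x ^+ k.+1.
Proof.
move=> x0 y0.
suff : 0 <= x ^+ k.+1 - k.+1%:R * x * y ^+ k + k%:R * y ^+ k.+1.
  move=> h.
  have -> : y ^+ k * (k.+1%:R * x - k%:R * y) = k.+1%:R * x * y ^+ k - k%:R * y ^+ k.+1.
    by rewrite exprSr; ring.
  lra.
elim: k => [|k IH]; first by rewrite expr0 expr1 mul1r mulr1 mul0r addr0 subrr.
have e : x ^+ k.+2 - k.+2%:R * x * y ^+ k.+1 + k.+1%:R * y ^+ k.+2 =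
   x * (x ^+ k.+1 - k.+1%:R * x * y ^+ k + k%:R * y ^+ k.+1)
   + k.+1%:R * y ^+ k * (x - y) ^+ 2.
  rewrite !exprS -!natr1 !mulrDl; ring.
rewrite e; apply: addr_ge0; first exact: mulr_ge0.
apply: mulr_ge0; last exact: sqr_ge0.
apply: mulr_ge0; [exact: ler0n | exact: exprn_ge0].
Qed.
Lemma F1alg {R : realType} (u v T x y kk : R) : 0 <= u -> u <= v -> 0 <= x ->
  T <= u * x + (kk + 1) * x -> v * ((kk + 1) * x - kk * y) <= u * x ->
  v * (T - kk * y) / (1 + v) <= u * (T - kk * x) / (1 + u).
Proof.
move=> u0 uv x0 hT hK.
rewrite ler_pdivrMr; last lra.
rewrite mulrAC ler_pdivlMr; last lra.
have e : u * (T - kk * x) * (1 + v) - v * (T - kk * y) * (1 + u) =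
  (T - (kk + 1) * x - u * x) * (u - v) + (1 + u) * (u * x - v * ((kk + 1) * x - kk * y)).
  by ring.
have h1 : 0 <= (T - (kk + 1) * x - u * x) * (u - v) by apply: mulr_le0; lra.
have h2 : 0 <= (1 + u) * (u * x - v * ((kk + 1) * x - kk * y)) by apply: mulr_ge0; lra.
lra.
Qed.

Lemma F1 {R : realType} (A T : R) k x y : 0 <= A -> 0 <= x -> x <= y ->
  T <= A * x ^+ k.+1 + k.+1%:R * x -> psi A T k y <= psi A T k x.
Proof.
move=> A0 x0 xy hT.
have y0 : 0 <= y by lra.
rewrite /psi; apply: (@F1alg _ _ _ _ _ _ k%:R).
- by apply: mulr_ge0 => //; exact: exprn_ge0.
- by apply: ler_wpM2l => //; apply: lerXn2r.
- done.
- by rewrite -natr1 exprSr mulrA in hT; lra.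
- have := KF k x y x0 y0.
  rewrite -natr1 => h.
  have := ler_wpM2l A0 h; rewrite exprSr; nra.
Qed.
Lemma V_succ {R : realType} (A T : R) n k z :
  Phi n.+1 (T - k%:R * z) (A * z ^+ k) z =
  if z * (1 + A * z ^+ k) < T - k%:R * z
  then Phi n (T - k.+1%:R * z) (A * z ^+ k.+1) z
  else iter n hh (psi A T k z).
Proof.
rewrite /= /psi.
have -> : T - k%:R * z - z = T - k.+1%:R * z by rewrite -natr1; ring.
by rewrite exprSr mulrA.
Qed.

Lemma psi_ge0 {R : realType} (A T : R) k y : 0 <= A -> 0 <= y ->
  A * y ^+ k + k%:R * y <= T -> 0 <= psi A T k y.
Proof.
move=> A0 y0 hy.
have h1 : 0 <= A * y ^+ k by apply: mulr_ge0 => //; exact: exprn_ge0.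
rewrite /psi; apply: divr_ge0; last lra.
apply: mulr_ge0 => //; lra.
Qed.

Lemma MonoK {R : realType} (A T : R) n : 0 <= A -> A <= 1 -> 0 <= T -> T <= 1 ->
  forall k, (0 < k)%N -> forall x y, 0 <= x -> x <= y -> A * y ^+ k + k%:R * y <= T ->
  Phi n (T - k%:R * y) (A * y ^+ k) y <= Phi n (T - k%:R * x) (A * x ^+ k) x.
Proof.
move=> A0 A1 T0 T1.
elim: n => [|n IH] k k0 x y x0 xy hy.
  rewrite /=; have : 0 <= k%:R :> R by exact: ler0n.
  nra.
have y0 : 0 <= y by lra.
have Axk : A * x ^+ k <= A * y ^+ k by apply: ler_wpM2l => //; exact: lerXn2r.
have Axk0 : 0 <= A * x ^+ k by apply: mulr_ge0 => //; exact: exprn_ge0.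
have kR : 0 <= k%:R :> R by exact: ler0n.
rewrite !V_succ.
case: ifP => fy; case: ifP => fx.
- apply: IH => //.
  rewrite exprSr mulrA -natr1; lra.
- exfalso; move/negbT: fx; rewrite -leNgt => fx.
  have : x * (1 + A * x ^+ k) + k%:R * x <= y * (1 + A * y ^+ k) + k%:R * y by nra.
  lra.
-
  move/negbT: fy; rewrite -leNgt => fy.
  pose q : {poly R} := A *: 'X^(k.+1) + (k.+1%:R) *: 'X - T%:P.
  have qE : forall z, q.[z] = A * z ^+ k.+1 + k.+1%:R * z - T.
    by move=> z; rewrite /q !hornerE.
  have [z /andP[xz zy] rz] : exists2 z, x <= z <= y & root q z.
    apply: poly_ivt => //; rewrite !qE !exprSr !mulrA -natr1; apply/andP; split; nra.
  move: rz; rewrite /root qE subr_eq0 => /eqP hz.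
  have z0 : 0 <= z by lra.
  have w0 : 0 <= A * z ^+ k.+1 by apply: mulr_ge0 => //; exact: exprn_ge0.
  have z1 : z <= 1.
    have : k.+1%:R * z <= 1 by lra.
    have : 1 <= k.+1%:R :> R by rewrite ler1n.
    nra.
  have wz : A * z ^+ k.+1 <= z.
    have h1 : z ^+ k.+1 <= z.
      rewrite exprS; apply: ler_piMr => //; exact: exprn_ile1.
    nra.
  have hz' : A * z ^+ k.+1 + k.+1%:R * z <= T by rewrite hz.
  have := IH k.+1 isT x z x0 xz hz'.
  have -> : T - k.+1%:R * z = A * z ^+ k.+1 by lra.
  rewrite Phi_eq //.
  apply: le_trans; apply: iter_hh_mono; first exact: psi_ge0.
  have -> : A * z ^+ k.+1 = psi A T k z.
    rewrite /psi.
    have -> : T - k%:R * z = z * (1 + A * z ^+ k).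
      by rewrite exprSr mulrA -natr1 in hz; lra.
    have Azk : 0 <= A * z ^+ k by apply: mulr_ge0 => //; exact: exprn_ge0.
    rewrite mulrA mulfK; last by apply: lt0r_neq0; lra.
    by rewrite exprSr mulrA.
  apply: F1 => //; lra.
- apply: iter_hh_mono; first exact: psi_ge0.
  apply: F1 => //.
  move/negbT: fx; rewrite -leNgt => fx.
  rewrite exprSr mulrA -natr1; lra.
Qed.
Lemma Bellman {R : realType} (T A p x : R) n : 0 <= A -> A <= 1 -> 0 <= T -> T <= 1 ->
  0 <= x -> x <= p -> A * x + x <= T ->
  Phi n.+1 T A p <= Phi n (T - x) (A * x) x.
Proof.
move=> A0 A1 T0 T1 x0 xp hx.
have Mo : forall y, x <= y -> A * y + y <= T ->
    Phi n (T - y) (A * y) y <= Phi n (T - x) (A * x) x.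
  move=> y xy hy.
  have := @MonoK R A T n A0 A1 T0 T1 1 isT x y x0 xy.
  by rewrite !expr1 mulr1n !mul1r; apply.
rewrite /=; case: ifP => hp.
  apply: Mo => //; lra.
set y := T / (1 + A).
have hy : y * (1 + A) = T by rewrite /y mulfVK //; apply: lt0r_neq0; lra.
have xy : x <= y by rewrite /y ler_pdivlMr; lra.
have y0 : 0 <= y by lra.
have := Mo y xy; rewrite -/y => H.
have e1 : T - y = A * y by lra.
have e2 : A * T / (1 + A) = A * y by rewrite /y mulrA.
rewrite e2; apply: le_trans (H _); last by nra.
rewrite e1 Phi_eq //; first exact: mulr_ge0.
nra.
Qed.

Lemma seq_bound {R : realType} n : forall (x : nat -> R) (T A p : R),
  0 <= A -> A <= 1 -> 0 <= T -> T <= 1 ->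
  (forall i, (i < n)%N -> 0 <= x i) -> ((0 < n)%N -> x 0%N <= p) ->
  (forall i, (i.+1 < n)%N -> x i.+1 <= x i) ->
  (forall k, (0 < k <= n)%N -> A * \prod_(i < k) x i <= T - \sum_(i < k) x i) ->
  Phi n T A p <= T - \sum_(i < n) x i.
Proof.
elim: n => [|n IH] x T A p A0 A1 T0 T1 xpos xp xdec cons.
  by rewrite big_ord0 subr0.
have x00 : 0 <= x 0%N by apply: xpos.
have c1 := cons 1%N isT.
rewrite big_ord1 big_ord1 in c1.
have Ax0 : 0 <= A * x 0%N by exact: mulr_ge0.
apply: (le_trans (@Bellman R T A p (x 0%N) n A0 A1 T0 T1 x00 (xp isT) _)); first lra.
rewrite big_ord_recl.
have -> : T - (x 0%N + \sum_(i < n) x (bump 0 i)) = (T - x 0%N) - \sum_(i < n) x i.+1.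
  by rewrite opprD addrA.
apply: (IH (fun i => x i.+1)).
- exact: Ax0.
- have : x 0%N <= 1 by lra.
  nra.
- lra.
- lra.
- by move=> i hi; apply: xpos.
- by move=> hn; apply: xdec.
- by move=> i hi; apply: xdec.
- move=> k /andP[k0 kn].
  have := cons k.+1 kn.
  rewrite big_ord_recl [X in _ <= T - X]big_ord_recl.
  rewrite mulrA.
  have -> : T - (x 0%N + \sum_(i < k) x (bump 0 i)) = T - x 0%N - \sum_(i < k) x i.+1.
    by rewrite opprD addrA.
  done.
Qed.
Lemma all_zip1 {R : realType} (s t : seq R) :
  all (fun v => 0 < v) s -> all (fun p : R * R => 0 < p.1) (zip s t).
Proof.
elim: s t => [|a s IH] [|b t] //= /andP[a0 hs].
by rewrite a0 IH.
Qed.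

Lemma abel_aux {R : realType} (zs ys : seq R) : forall (z y : R),
  size zs = size ys -> path >=%R z zs -> all (fun v => 0 < v) (z :: zs) ->
  (forall k, \sum_(v <- drop k (y :: ys)) v <= \sum_(v <- drop k (z :: zs)) v) ->
  (\sum_(v <- z :: zs) v - \sum_(v <- y :: ys) v) / z <=
  \sum_(p <- zip (z :: zs) (y :: ys)) (p.1 - p.2) / p.1.
Proof.
elim: zs ys => [|z2 zs IH] [|y2 ys] //= z y.
  move=> _ _ _ _; rewrite !big_cons !big_nil !addr0.
  by [].
move=> [hs] /andP[zz2 hp] /andP[z0 /andP[z20 hpos]] ht.
rewrite big_cons /=.
have := IH ys z2 y2 hs hp (introT andP (conj z20 hpos)) (fun k => ht k.+1).
move=> H.
have E2 : 0 <= \sum_(v <- z2 :: zs) v - \sum_(v <- y2 :: ys) v.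
  by have := ht 1%N; rewrite /=; lra.
have H2 : (\sum_(v <- z2 :: zs) v - \sum_(v <- y2 :: ys) v) / z <=
          (\sum_(v <- z2 :: zs) v - \sum_(v <- y2 :: ys) v) / z2.
  apply: ler_wpM2l => //; rewrite lef_pV2 ?posrE //.
rewrite [\sum_(v <- [:: y, y2 & ys]) v]big_cons [X in _ <= X]big_cons /=.
have -> : (z + \sum_(v <- z2 :: zs) v - (y + \sum_(v <- y2 :: ys) v)) / z =
   (z - y) / z + (\sum_(v <- z2 :: zs) v - \sum_(v <- y2 :: ys) v) / z.
  by rewrite -mulrDl; congr (_ / _); ring.
lra.
Qed.

Lemma abel {R : realType} (zs ys : seq R) :
  size zs = size ys -> sorted >=%R zs -> all (fun v => 0 < v) zs ->
  (forall k, \sum_(v <- drop k ys) v <= \sum_(v <- drop k zs) v) ->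
  \sum_(p <- zip zs ys) p.2 / p.1 <= (size zs)%:R.
Proof.
case: zs ys => [|z zs] [|y ys] //=.
  by move=> *; rewrite big_nil.
move=> [hs] hp hpos ht.
have := @abel_aux R zs ys z y hs hp hpos ht.
have E0 : 0 <= \sum_(v <- z :: zs) v - \sum_(v <- y :: ys) v.
  by have := ht 0%N; rewrite !drop0; lra.
move: (hpos) => /andP[z0 _].
have h0 : 0 <= (\sum_(v <- z :: zs) v - \sum_(v <- y :: ys) v) / z.
  by apply: divr_ge0 => //; exact: ltW.
move=> H.
have e : forall (s : seq (R * R)), all (fun p => 0 < p.1) s ->
    \sum_(p <- s) p.2 / p.1 = (size s)%:R - \sum_(p <- s) (p.1 - p.2) / p.1.
  elim=> [|q s IHs] /=; first by rewrite !big_nil subr0.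
  move=> /andP[q0 hs'].
  rewrite !big_cons IHs // -natr1.
  have -> : (q.1 - q.2) / q.1 = 1 - q.2 / q.1 by rewrite mulrBl divff //; exact: lt0r_neq0.
  ring.
rewrite e.
  have -> : size (zip (z :: zs) (y :: ys)) = (size zs).+1 by rewrite size_zip /= hs minnn.
  lra.
have Hz : forall (s t : seq R), all (fun v => 0 < v) s ->
    all (fun p : R * R => 0 < p.1) (zip s t).
  elim=> [|a s IH2] [|b t] //= /andP[a0 hs2].
  by rewrite a0 IH2.
exact: (Hz (z :: zs) (y :: ys) hpos).
Qed.
Lemma AMGM_seq {R : realType} (rs : seq R) : all (fun r => 0 <= r) rs ->
  \sum_(r <- rs) r <= (size rs)%:R -> \prod_(r <- rs) r <= 1.
Proof.
move=> hpos hsum.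
case En : (size rs) => [|n].
  by move/size0nil: En => ->; rewrite big_nil.
have := @leif_AGM R 'I_(size rs) predT (fun i => nth 0 rs i).
have hc : #|(predT : {pred 'I_(size rs)})| = size rs by rewrite cardT size_enum_ord.
rewrite hc.
have eP : \prod_(i in (predT : {pred 'I_(size rs)})) rs`_i = \prod_(r <- rs) r.
  by rewrite (big_nth 0) big_mkord.
have eS : \sum_(i in (predT : {pred 'I_(size rs)})) rs`_i = \sum_(r <- rs) r.
  by rewrite (big_nth 0) big_mkord.
rewrite eP eS => H.
have H0 : {in predT, forall i : 'I_(size rs), 0 <= rs`_i}.
  by move=> i _; apply: (allP hpos); exact: mem_nth.
have := (H H0).1; move/le_trans; apply.
have n0 : (0 < (size rs)%:R :> R) by rewrite En ltr0n.
have s0 : 0 <= \sum_(r <- rs) r by rewrite big_seq; apply: sumr_ge0 => i /(allP hpos).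
apply: exprn_ile1.
  by apply: divr_ge0 => //; exact: ltW.
by rewrite ler_pdivrMr // mul1r.
Qed.
Lemma prod_ratio {R : realType} (zs ys : seq R) : size zs = size ys ->
  all (fun v => 0 < v) zs ->
  \prod_(y <- ys) y = \prod_(p <- zip zs ys) (p.2 / p.1) * \prod_(z <- zs) z.
Proof.
elim: zs ys => [|z zs IH] [|y ys] //=.
  by move=> _ _; rewrite !big_nil mulr1.
move=> [hs] /andP[z0 hz].
rewrite !big_cons (IH ys hs hz) /=.
have : z != 0 by exact: lt0r_neq0.
move=> zn0; rewrite mulrACA mulfVK //.
Qed.

Lemma majorize {R : realType} (zs ys : seq R) :
  size zs = size ys -> sorted >=%R zs -> all (fun v => 0 < v) zs ->
  all (fun v => 0 <= v) ys ->
  (forall k, \sum_(v <- drop k ys) v <= \sum_(v <- drop k zs) v) ->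
  \prod_(y <- ys) y <= \prod_(z <- zs) z.
Proof.
move=> hs hsort hpos hy ht.
rewrite (@prod_ratio R zs ys hs hpos).
have P0 : 0 <= \prod_(z <- zs) z.
  by rewrite big_seq; apply: prodr_ge0 => i /(allP hpos) /ltW.
have r1 : \prod_(p <- zip zs ys) (p.2 / p.1) <= 1.
  rewrite -(big_map (fun p : R * R => p.2 / p.1) xpredT (fun r => r)).
  apply: AMGM_seq.
    move: hpos hy; clear; elim: zs ys => [|a s IH] [|b t] //= /andP[a0 hs2] /andP[b0 ht2].
    by rewrite IH // andbT; apply: divr_ge0 => //; exact: ltW.
  rewrite big_map size_map size_zip -hs minnn.
  exact: abel.
by have := ler_wpM2r P0 r1; rewrite mul1r.
Qed.
Lemma take_find_ge {R : realType} (L : R) (s : seq R) :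
  all (fun v => L <= v) (take (find (fun v => v < L) s) s).
Proof.
elim: s => [|a s IH] //=.
case: ifP => // h /=.
by rewrite IH andbT leNgt h.
Qed.

Lemma ge_trans_R {R : realType} : transitive (>=%R : rel R).
Proof. by move=> a b c h1 h2; exact: le_trans h2 h1. Qed.

Lemma drop_find_le {R : realType} (L : R) (s : seq R) : sorted >=%R s ->
  all (fun v => v <= L) (drop (find (fun v => v < L) s) s).
Proof.
elim: s => [|a s IH] //= hs.
case: ifP => h /=.
  rewrite /= (ltW h) /=.
  have := order_path_min ge_trans_R hs.
  apply: sub_all => v /= hv; apply: le_trans (ltW h); exact: hv.
by apply: IH; exact: path_sorted hs.
Qed.

Lemma sum_ge0_seq {R : realType} (s : seq R) : all (fun v => 0 < v) s -> 0 <= \sum_(v <- s) v.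
Proof. by move=> h; rewrite big_seq; apply: sumr_ge0 => i /(allP h) /ltW. Qed.

Lemma insert_major {R : realType} (s ys : seq R) (L : R) :
  sorted >=%R s -> all (fun v => 0 < v) s -> 0 < L ->
  size ys = (size s).+1 -> all (fun v => 0 <= v) ys ->
  (forall k, (k <= size s)%N -> \sum_(v <- drop k ys) v <= L + \sum_(v <- drop k s) v) ->
  (forall k, (k < size s)%N -> \sum_(v <- drop k.+1 ys) v <= \sum_(v <- drop k s) v) ->
  \prod_(y <- ys) y <= L * \prod_(v <- s) v.
Proof.
move=> hsort hpos L0 hsz hy HB HA.
set m := find (fun v => v < L) s.
have mn : (m <= size s)%N by exact: find_size.
set zs := take m s ++ L :: drop m s.
have hzs : size zs = size ys.
  rewrite hsz /zs size_cat size_takel //= size_drop.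
  by rewrite addnS subnKC.
have Pz : \prod_(z <- zs) z = L * \prod_(v <- s) v.
  rewrite /zs big_cat big_cons /= mulrCA -big_cat /=.
  by rewrite cat_take_drop.
rewrite -Pz; apply: majorize => //.
- rewrite sorted_pairwise; last exact: ge_trans_R.
  have := hsort; rewrite sorted_pairwise; last exact: ge_trans_R.
  rewrite -{1}(cat_take_drop m s) pairwise_cat => /and3P[h1 h2 h3].
  rewrite pairwise_cat allrel_consr pairwise_cons h1 h2 h3 !andbT /=.
  apply/andP; split; first exact: take_find_ge.
  exact: drop_find_le.
- rewrite /zs all_cat /= L0 /=.
  have := hpos; rewrite -{1}(cat_take_drop m s) all_cat => /andP[-> ->].
  done.
- move=> k.
  have dk : forall k, (k <= m)%N -> drop k s = drop k (take m s) ++ drop m s.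
    move=> k' hk'; rewrite -{1}(cat_take_drop m s) drop_cat size_takel //.
    case: ltnP => hk2 //.
    have -> : k' = m by apply/eqP; rewrite eqn_leq hk' hk2.
    have -> : drop m (take m s) = [::] by apply: drop_oversize; rewrite size_takel.
    by rewrite subnn drop0.
  case: (leqP k m) => hk.
  + have -> : drop k zs = drop k (take m s) ++ L :: drop m s.
      rewrite /zs drop_cat size_takel //.
      case: ltnP => hk2 //.
      have -> : k = m by apply/eqP; rewrite eqn_leq hk hk2.
      have -> : drop m (take m s) = [::] by apply: drop_oversize; rewrite size_takel.
    by rewrite subnn drop0.
    rewrite big_cat big_cons /=.
    have := HB k (leq_trans hk mn).
    by rewrite (dk k hk) big_cat /=; lra.
  + case: k hk => [|k] hk //.
    have -> : drop k.+1 zs = drop k s.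
      rewrite /zs drop_cat size_takel // ltnNge (ltnW hk) /=.
      by rewrite subSn // /= drop_drop subnK.
    case: (ltnP k (size s)) => hk3.
      exact: HA.
    rewrite drop_oversize; last by rewrite hsz.
    rewrite big_nil; apply: sum_ge0_seq.
    move: hpos; rewrite -{1}(cat_take_drop k s) all_cat => /andP[_ ->] //.
Qed.
Definition sig {R : realType} (t : nat) : R := iter t hh 1.

Lemma sig_gt0 {R : realType} t : 0 < sig (R := R) t.
Proof.
elim: t => [|t IH] /=; first exact: ltr01.
rewrite /hh; apply: divr_gt0; [exact: exprn_gt0 | lra].
Qed.

Lemma sigS {R : realType} t : sig (R := R) t.+1 = hh (sig t).
Proof. by []. Qed.

Lemma sylv_prod_gt0 n : (0 < sylv_prod n)%N.
Proof. by elim: n => //= n IH; rewrite muln_gt0 IH addn1. Qed.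

Lemma sig_sylv {R : realType} t : sig (R := R) t = 1 / (sylv_prod t)%:R.
Proof.
elim: t => [|t IH]; first by rewrite /sig /= divr1.
rewrite sigS IH /= /hh.
have P0 : 0 < (sylv_prod t)%:R :> R by rewrite ltr0n sylv_prod_gt0.
rewrite natrM natrD /=.
field; apply/andP; split; lra.
Qed.

Lemma sig_diff {R : realType} t : sig (R := R) t * (sig t - sig t.+1) = sig t.+1.
Proof.
rewrite sigS /hh.
have h := sig_gt0 (R := R) t.
field; lra.
Qed.

Lemma sig_dec {R : realType} t : sig (R := R) t.+1 <= sig t.
Proof. rewrite sigS; apply: hh_le; exact: ltW (sig_gt0 t). Qed.

Lemma sig_small {R : realType} k : (2 <= k)%N -> k.+2%:R * sig (R := R) k <= 1.
Proof.
elim: k => [|k IH] //.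
case: (ltnP k 2) => hk.
  case: k hk IH => [|[|[|k]]] // _ _ _.
  by rewrite sig_sylv (_ : sylv_prod 2 = 6%N) //; lra.
move=> _; have := IH hk.
rewrite sigS /hh.
set s := sig k => h.
have s0 : 0 < s by exact: sig_gt0.
have kk : 2%:R <= k%:R :> R by rewrite ler_nat.
rewrite -!natr1 in h *.
set K := k%:R in h kk *.
have h1 : s ^+ 2 / (1 + s) <= s ^+ 2.
  rewrite ler_pdivrMr; last lra.
  rewrite expr2; nra.
have h2 : (K + 1 + 1) ^+ 2 * s ^+ 2 <= 1.
  rewrite -exprMn; apply: exprn_ile1; nra.
have h3 : K + 1 + 1 + 1 <= (K + 1 + 1) ^+ 2 by rewrite expr2; nra.
have h4 : 0 <= s ^+ 2 / (1 + s) by apply: divr_ge0; [exact: sqr_ge0 | lra].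
have h5 : 0 <= s ^+ 2 by exact: sqr_ge0.
nra.
Qed.
Lemma drop_cat_le {T : Type} k (s1 s2 : seq T) : (k <= size s1)%N ->
  drop k (s1 ++ s2) = drop k s1 ++ s2.
Proof.
move=> hk; rewrite drop_cat; case: ltnP => hk2 //.
have -> : k = size s1 by apply/eqP; rewrite eqn_leq hk hk2.
by rewrite subnn drop0 drop_size.
Qed.

Lemma sum_drop_map {R : realType} (f : nat -> R) n k :
  \sum_(v <- drop k [seq f i | i <- iota 0 n]) v = \sum_(k <= i < n) f i.
Proof. by rewrite -map_drop drop_iota add0n big_map /index_iota. Qed.

Lemma prod_map_iota {R : realType} (f : nat -> R) n :
  \prod_(v <- [seq f i | i <- iota 0 n]) v = \prod_(i < n) f i.
Proof. by rewrite big_map -(big_mkord xpredT) /index_iota subn0. Qed.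

Lemma prod_sig_diff {R : realType} n : \prod_(i < n) (sig (R := R) i - sig i.+1) = sig n.
Proof.
elim: n => [|n IH]; first by rewrite big_ord0.
by rewrite big_ord_recr /= IH sig_diff.
Qed.

Definition ysl {R : realType} (d : nat) : seq R :=
  [seq sig i - sig i.+1 | i <- iota 0 d.-1] ++ [:: sig d.-1].

Lemma ysl_size {R : realType} d : (0 < d)%N -> size (ysl (R := R) d) = d.
Proof. by move=> d0; rewrite size_cat size_map size_iota /= addn1 prednK. Qed.

Lemma ysl_prod {R : realType} d : \prod_(y <- ysl (R := R) d) y = sig d.-1 ^+ 2.
Proof.
by rewrite big_cat big_cons big_nil /= prod_map_iota prod_sig_diff mulr1 expr2.
Qed.

Lemma ysl_tail {R : realType} d k : (k <= d.-1)%N ->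
  \sum_(v <- drop k (ysl (R := R) d)) v = sig k.
Proof.
move=> hk; rewrite /ysl drop_cat_le ?size_map ?size_iota //.
rewrite big_cat big_cons big_nil /= addr0 sum_drop_map.
have -> : \sum_(k <= i < d.-1) (sig (R := R) i - sig i.+1) = sig k - sig d.-1.
  rewrite (@telescope_sumr_eq _ k d.-1 (fun i => - sig i)) //; first by ring.
  by move=> i _; ring.
by ring.
Qed.
Lemma sorted_map_iota {R : realType} (f : nat -> R) n : forall m,
  (forall i, (m <= i)%N -> (i.+1 < m + n)%N -> f i.+1 <= f i) ->
  sorted >=%R [seq f i | i <- iota m n].
Proof.
elim: n => [|n IH] m h //=.
case: n IH h => [|n] IH h //=.
apply/andP; split.
  by apply: h => //; lia.
have := IH m.+1 _.
  rewrite /=; apply.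
move=> i hi hi2; apply: h; first exact: ltnW.
lia.
Qed.
Lemma hks_lemma {R : realType} d k : (4 <= d)%N -> (k < d.-1)%N ->
  k.+2%:R * sig (R := R) k <= (d.-1 - k)%:R.
Proof.
move=> hd hk.
case: k hk => [|[|k]] hk.
- rewrite /sig /= mulr1 ler_nat; lia.
- rewrite sig_sylv (_ : sylv_prod 1 = 2%N) //.
  have : 2%:R <= (d.-1 - 1)%:R :> R by rewrite ler_nat; lia.
  lra.
- apply: (le_trans (@sig_small R k.+2 isT)).
  by rewrite ler1n; lia.
Qed.

Lemma main_bound {R : realType} (d : nat) (hd : (4 <= d)%N) (b : 'I_d.+1 -> R) :
  tau_feasible b ->
  1 / (d.+1%:R * ((sylv d)%:R - 1) ^+ 2) <= \prod_(i < d.+1 | (i < d)%N) b i.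
Proof.
case=> hdec hc0 hsum hcons.
pose bn (i : nat) := b (inord i).
have bnE : forall i : 'I_d.+1, bn i = b i by move=> i; rewrite /bn inord_val.
set c := b ord_max.
have c00 : 0 <= c := hc0.
have cE : bn d = c by rewrite /bn /c; congr b; apply: val_inj; rewrite /= inordK.
have bdec : forall i j, (i <= j)%N -> (j <= d)%N -> bn j <= bn i.
  move=> i j hij hj; apply: hdec; rewrite !inordK //; lia.
have bge : forall i, (i <= d)%N -> c <= bn i by move=> i hi; rewrite -cE; exact: bdec.
pose x (i : nat) := bn i - c.
have hsum' : \sum_(i < d.+1) bn i = 1 by rewrite -hsum; apply: eq_bigr => i _; rewrite bnE.
have sumd : \sum_(i < d) bn i = 1 - c.
  by move: hsum'; rewrite big_ord_recr /= cE => <-; ring.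
have sumx : \sum_(i < d) x i = 1 - d.+1%:R * c.
  rewrite /x sumrB sumd sumr_const card_ord -mulr_natl -natr1; ring.
have hcons' : forall t, (1 <= t <= d)%N -> \prod_(i < t) x i <= 1 - \sum_(i < t) x i.
  move=> t ht; have := hcons t ht.
  have tl : (t <= d.+1)%N by lia.
  have -> : \prod_(i < d.+1 | (i < t)%N) (b i - c) = \prod_(i < t) x i.
    rewrite (big_ord_widen d.+1 x tl); apply: eq_bigr => i _; by rewrite /x bnE.
  have e1 : \sum_(i < d.+1) (b i - c) = 1 - d.+1%:R * c.
    rewrite sumrB hsum sumr_const card_ord -mulr_natl; ring.
  have e2 : \sum_(i < d.+1 | (i < t)%N) (b i - c) = \sum_(i < t) x i.
    rewrite (big_ord_widen d.+1 x tl); apply: eq_bigr => i _; by rewrite /x bnE.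
  have e3 : \sum_(j < d.+1 | (t <= j)%N) (b j - c) = 1 - d.+1%:R * c - \sum_(i < t) x i.
    rewrite -e1 -e2 (bigID (fun j : 'I_d.+1 => (j < t)%N) xpredT) /=.
    rewrite addrAC subrr add0r; apply: eq_bigl => j; by rewrite -leqNgt.
  by rewrite e3 -/c => H; lra.
have LS : forall t, (t <= d)%N -> sig t <= 1 - \sum_(i < t) x i.
  move=> t ht; rewrite /sig -Phi11.
  apply: seq_bound => //; try lra.
  - by move=> i hi; rewrite /x subr_ge0; apply: bge; lia.
  - move=> t0; rewrite /x.
    have : bn 0%N <= 1.
      rewrite -hsum' big_ord_recl /=.
      have -> : bn 0%N = bn (@ord0 d) by [].
      rewrite lerDl; apply: sumr_ge0 => i _.
      apply: le_trans c00 _; exact: bge.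
    move=> h; lra.
  - by move=> i hi; rewrite /x lerD2r; apply: bdec; lia.
  - by move=> k hk; rewrite mul1r; apply: hcons'; lia.
have c0 : 0 < c.
  have := LS d (leqnn d); rewrite sumx.
  have := sig_gt0 (R := R) d.
  have : 0 <= d%:R :> R by exact: ler0n.
  rewrite -natr1; nra.
have dpos : (0 < d)%N by lia.
have tailx : forall k, (k <= d)%N -> 1 - \sum_(i < k) x i = \sum_(k <= i < d) x i + d.+1%:R * c.
  move=> k hk.
  have e : \sum_(0 <= i < d) x i = \sum_(0 <= i < k) x i + \sum_(k <= i < d) x i.
    exact: big_cat_nat.
  rewrite !big_mkord sumx in e; lra.
have tailx' : forall k, (k <= d.-1)%N ->
    \sum_(k <= i < d) x i = \sum_(k <= i < d.-1) x i + x d.-1.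
  by move=> k hk; rewrite -{1}(prednK dpos) big_nat_recr.
have sum_bn : forall k, (k <= d.-1)%N ->
    \sum_(k <= i < d.-1) bn i = \sum_(k <= i < d.-1) x i + (d.-1 - k)%:R * c.
  move=> k hk.
  have -> : \sum_(k <= i < d.-1) bn i = \sum_(k <= i < d.-1) (x i + c).
    by apply: eq_bigr => i _; rewrite /x subrK.
  by rewrite big_split /= sumr_const_nat mulr_natl.
have xl0 : 0 <= x d.-1 by rewrite /x subr_ge0; apply: bge; lia.
have HB : forall k, (k <= d.-1)%N -> sig k <= d.+1%:R * bn d.-1 + \sum_(k <= i < d.-1) bn i.
  move=> k hk.
  have := LS k (leq_trans hk (leq_pred d)).
  rewrite tailx ?(leq_trans hk (leq_pred d)) // tailx' // sum_bn //.
  have -> : bn d.-1 = x d.-1 + c by rewrite /x subrK.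
  have h1 : 0 <= d%:R * x d.-1 by apply: mulr_ge0 => //; exact: ler0n.
  have h2 : 0 <= (d.-1 - k)%:R * c by apply: mulr_ge0; [exact: ler0n | lra].
  rewrite -natr1; lra.
have HA : forall k, (k < d.-1)%N -> sig k.+1 <= \sum_(k <= i < d.-1) bn i.
  move=> k hk.
  have hk' : (k <= d.-1)%N by exact: ltnW.
  have := LS k (leq_trans hk' (leq_pred d)).
  rewrite tailx ?(leq_trans hk' (leq_pred d)) // tailx' // sum_bn //.
  set Rx := \sum_(k <= i < d.-1) x i.
  set m := (d.-1 - k)%:R : R.
  set xl := x d.-1.
  set s := sig k.
  move=> hS.
  have m0 : 0 <= m by exact: ler0n.
  have hm : m * xl <= Rx.
    have -> : m * xl = \sum_(k <= i < d.-1) xl by rewrite sumr_const_nat -mulr_natl.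
    rewrite /Rx; apply: ler_sum_nat => i /andP[hi1 hi2].
    by rewrite /xl /x lerD2r; apply: bdec; lia.
  have R0 : 0 <= Rx.
    rewrite /Rx big_nat_cond; apply: sumr_ge0 => i /andP[/andP[hi1 hi2] _].
    by rewrite /x subr_ge0; apply: bge; lia.
  have hD : d.+1%:R = m + k.+2%:R :> R.
    by rewrite /m -natrD; congr (_%:R); lia.
  have s0 : 0 < s by exact: sig_gt0.
  have hks : k.+2%:R * s <= m by exact: hks_lemma.
  set D := d.+1%:R : R in hS hD *.
  have st1 : m * s <= D * (Rx + m * c).
    have h1 : m * (s - Rx - xl) <= m * (D * c) by apply: ler_wpM2l => //; lra.
    have h2 : 0 <= (k.+2%:R - 1) * Rx.
      apply: mulr_ge0 => //; rewrite subr_ge0 ler1n //.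
    have e : D * (Rx + m * c) = m * Rx + k.+2%:R * Rx + m * (D * c) by rewrite hD; ring.
    rewrite e; nra.
  have st2 : D * sig k.+1 <= m * s.
    rewrite sigS -/s /hh mulrA ler_pdivrMr; last lra.
    have : s * (k.+2%:R * s - m) <= 0 by apply: mulr_ge0_le0; lra.
    rewrite hD expr2; nra.
  have D0 : 0 < D by rewrite /D ltr0n.
  rewrite -(ler_pM2l D0); lra.
set xbs := [seq bn i | i <- iota 0 d.-1].
set L := d.+1%:R * bn d.-1.
have bpos : forall i, (i <= d)%N -> 0 < bn i by move=> i hi; apply: lt_le_trans c0 (bge i hi).
have hsx : size xbs = d.-1 by rewrite size_map size_iota.
have k1 : sorted >=%R xbs.
  apply: sorted_map_iota => i _ hi; apply: bdec => //; lia.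
have k2 : all (fun v => 0 < v) xbs.
  apply/allP => v /mapP[i]; rewrite mem_iota => /andP[_ hi] ->; apply: bpos; lia.
have k3 : 0 < L.
  rewrite /L; apply: mulr_gt0; [by rewrite ltr0n | apply: bpos; lia].
have k4 : size (ysl (R := R) d) = (size xbs).+1 by rewrite hsx prednK // ysl_size.
have k5 : all (fun v => 0 <= v) (ysl (R := R) d).
  rewrite all_cat /= andbT (ltW (sig_gt0 _)) andbT.
  apply/allP => v /mapP[i _ ->]; rewrite subr_ge0; exact: sig_dec.
have k6 : forall k, (k <= size xbs)%N ->
    \sum_(v <- drop k (ysl d)) v <= L + \sum_(v <- drop k xbs) v.
  move=> k; rewrite hsx => hk; rewrite ysl_tail // sum_drop_map; exact: HB.
have k7 : forall k, (k < size xbs)%N ->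
    \sum_(v <- drop k.+1 (ysl d)) v <= \sum_(v <- drop k xbs) v.
  move=> k; rewrite hsx => hk; rewrite ysl_tail // sum_drop_map; exact: HA.
have := @insert_major R xbs (ysl d) L k1 k2 k3 k4 k5 k6 k7.
rewrite ysl_prod prod_map_iota sig_sylv => H.
rewrite (eq_bigr (fun i : 'I_d.+1 => bn i)); last by move=> i _; rewrite bnE.
rewrite -(big_ord_widen d.+1 bn (leqnSn d)).
have -> : \prod_(i < d) bn i = \prod_(i < d.-1) bn i * bn d.-1.
  by rewrite -!(big_mkord xpredT) -{1}(prednK dpos) big_nat_recr //.
rewrite /sylv natrD addrK.
set P := (sylv_prod d.-1)%:R : R in H *.
set Q := \prod_(i < d.-1) bn i in H *.
have P0 : 0 < P by rewrite /P ltr0n sylv_prod_gt0.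
have D0 : 0 < d.+1%:R :> R by rewrite ltr0n.
move: H; rewrite /L expr_div_n expr1n ler_pdivrMr; last exact: exprn_gt0.
move=> H; rewrite ler_pdivrMr; last by apply: mulr_gt0 => //; exact: exprn_gt0.
have -> : Q * bn d.-1 * (d.+1%:R * P ^+ 2) = d.+1%:R * bn d.-1 * Q * P ^+ 2 by ring.
exact: H.
Qed.
Theorem lemma4p1 (R : realType) (d : nat) (hd : (4 <= d)%N) :
  1 / (d.+1%:R * ((sylv d)%:R - 1) ^+ 2) <= tau (R := R) d.
Proof.
rewrite /tau; apply: lb_le_inf.
  pose b0 := fun _ : 'I_d.+1 => (d.+1%:R : R)^-1.
  exists (\prod_(i < d.+1 | (i < d)%N) b0 i); exists b0; split => //.
  have D0 : (d.+1%:R : R) != 0 by rewrite pnatr_eq0.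
  split.
  - by move=> i j _; rewrite /b0.
  - by rewrite /b0 invr_ge0 ler0n.
  - by rewrite /b0 sumr_const card_ord -[_ *+ d.+1]mulr_natr mulVf.
  - move=> t /andP[t1 td].
    have -> : \sum_(j < d.+1 | (t <= j)%N) (b0 j - b0 ord_max) = 0.
      by apply: big1 => j _; rewrite subrr.
    have -> : \prod_(i < d.+1 | (i < t)%N) (b0 i - b0 ord_max) = 0.
      by rewrite (bigD1 ord0) //= subrr mul0r.
    by rewrite add0r /b0 mulfV.
move=> y [b [hb ->]]; exact: main_bound.
Qed.
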